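(* Let $\eta$ be a homogeneous integrable 2-form of degree two on $\mathbb{C}^4$ such that, with $\nu=dz_1\wedge\cdots\wedge dz_4$ and $X$ defined by $d\eta=i_X\nu$, one has $X\not\equiv0$ and $\eta=i_Yi_X\nu$ for some linear vector field $Y$. Let $R=\sum_j z_j\,\partial/\partial z_j$ and $\omega=i_R\eta$. Then for every $s\in\mathbb{C}$ the 2-form $\eta_s=\eta+s\,d\omega$ is integrable; more precisely $\eta_s\wedge\eta_s=0$, $d\eta_s=i_X\nu$ and $i_X\eta_s=0$.
   Context: A form is homogeneous of degree $m$ if its coefficients are homogeneous polynomials of degree $m$. A holomorphic $q$-form $\eta$ is integrable if every point $p$ outside its zero set has a neighborhood $V$ with holomorphic 1-forms $\omega_1,\dots,\omega_q$ on $V$ such that $\eta|_V=\omega_1\wedge\cdots\wedge\omega_q$ and $d\omega_j\wedge\eta=0$ for all $j$. *)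

(* Defs.v *)
(* Holomorphic differential forms on C^4, with C an arbitrary
   numClosedFieldType (an abstraction of the complex numbers). *)
From HB Require Import structures.
From mathcomp Require Import all_boot all_order all_algebra.
Set Implicit Arguments. Unset Strict Implicit. Unset Printing Implicit Defensive.
Import Order.TTheory GRing.Theory Num.Theory.
Local Open Scope ring_scope.

Section Forms.
Variable C : numClosedFieldType.

Definition pt := 'I_4 -> C.
Definition fn := pt -> C.
(* k-forms as alternating k-linear maps evaluated on the standard basis:
   eta i j z = eta_z(e_i, e_j), i.e. eta = sum_{i<j} eta i j dz_i /\ dz_j *)
Definition form1 := 'I_4 -> fn.
Definition form2 := 'I_4 -> 'I_4 -> fn.
Definition form3 := 'I_4 -> 'I_4 -> 'I_4 -> fn.
Definition form4 := 'I_4 -> 'I_4 -> 'I_4 -> 'I_4 -> fn.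
Definition vfield := 'I_4 -> fn.

Definition alternating2 (eta : form2) := forall i j z, eta i j z = - eta j i z.

Definition shift (z : pt) (k : 'I_4) (h : C) : pt :=
  fun m => z m + (if m == k then h else 0).

Definition has_partial (f : fn) (k : 'I_4) (z : pt) (l : C) :=
  forall e : C, 0 < e -> exists2 d : C, 0 < d &
    forall h : C, 0 < `|h| < d -> `|(f (shift z k h) - f z) / h - l| < e.

Definition is_d1_on (V : pt -> Prop) (om : form1) (theta : form2) :=
  exists D : 'I_4 -> 'I_4 -> fn,
    (forall a b z, V z -> has_partial (om b) a z (D a b z)) /\
    (forall a b z, V z -> theta a b z = D a b z - D b a z).

Definition is_d2_on (V : pt -> Prop) (eta : form2) (theta : form3) :=
  exists D : 'I_4 -> 'I_4 -> 'I_4 -> fn,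
    (forall a b c z, V z -> has_partial (eta b c) a z (D a b c z)) /\
    (forall a b c z, V z -> theta a b c z = D a b c z + D b c a z + D c a b z).

Definition everywhere : pt -> Prop := fun _ => True.
Definition is_d1 := is_d1_on everywhere.
Definition is_d2 := is_d2_on everywhere.

Definition wedge11 (a b : form1) : form2 :=
  fun i j z => a i z * b j z - a j z * b i z.

Definition wedge22 (al be : form2) : form4 :=
  fun i j k l z =>
    al i j z * be k l z - al i k z * be j l z + al i l z * be j k z
  + al j k z * be i l z - al j l z * be i k z + al k l z * be i j z.

(* nu = dz_1 /\ dz_2 /\ dz_3 /\ dz_4 : nu(e_i,e_j,e_k,e_l) = det[e_i;e_j;e_k;e_l] *)
Definition nu : form4 := fun i j k l _ =>
  \det (\matrix_(a < 4, b < 4) ((tnth [tuple i; j; k; l] a == b)%:R : C)).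

Definition ctr3 (X : vfield) (th : form4) : form3 :=
  fun j k l z => \sum_i X i z * th i j k l z.
Definition ctr2 (X : vfield) (th : form3) : form2 :=
  fun k l z => \sum_j X j z * th j k l z.
Definition ctr1 (X : vfield) (th : form2) : form1 :=
  fun l z => \sum_k X k z * th k l z.

Definition radial : vfield := fun k z => z k.

Definition hom2 (f : fn) :=
  exists a : 'I_4 -> 'I_4 -> C, forall z, f z = \sum_i \sum_j a i j * z i * z j.
Definition hom1 (f : fn) :=
  exists b : 'I_4 -> C, forall z, f z = \sum_i b i * z i.

Definition homogeneous_deg2_form2 (eta : form2) :=
  alternating2 eta /\ forall i j, hom2 (eta i j).
Definition linear_vfield (Y : vfield) := forall k, hom1 (Y k).

Definition openset (V : pt -> Prop) :=
  forall z, V z -> exists2 r : C, 0 < r & forall w, (forall k, `|w k - z k| < r) -> V w.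

Definition holomorphic_on (V : pt -> Prop) (f : fn) :=
  forall z, V z -> exists a : 'I_4 -> C, forall e : C, 0 < e ->
    exists2 d : C, 0 < d & forall h : pt, (forall k, `|h k| < d) ->
      `|f (fun m => z m + h m) - f z - \sum_k a k * h k| <= e * \sum_k `|h k|.

Definition integrable2 (eta : form2) :=
  forall p : pt, ~ (forall i j, eta i j p = 0) ->
    exists V : pt -> Prop, [/\ openset V, V p &
      exists om1 om2 : form1,
        [/\ forall i, holomorphic_on V (om1 i),
            forall i, holomorphic_on V (om2 i),
            forall i j z, V z -> eta i j z = wedge11 om1 om2 i j z &
            forall om, om = om1 \/ om = om2 ->
              exists theta, is_d1_on V om theta /\
                forall i j k l z, V z -> wedge22 theta eta i j k l z = 0]].

End Forms.

(* Main.v *)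
Require Import Defs.
From HB Require Import structures.
From mathcomp Require Import all_boot all_order all_algebra.
Import Order.TTheory GRing.Theory Num.Theory.
Local Open Scope ring_scope.

From mathcomp Require Import all_fingroup.
From mathcomp Require Import ring.
Set Implicit Arguments. Unset Strict Implicit. Unset Printing Implicit Defensive.

Notation o0 := (@Ordinal 4 0 isT).
Notation o1 := (@Ordinal 4 1 isT).
Notation o2 := (@Ordinal 4 2 isT).
Notation o3 := (@Ordinal 4 3 isT).

Section S.
Variable C : numClosedFieldType.


Lemma ord4P (i : 'I_4) : i = o0 \/ i = o1 \/ i = o2 \/ i = o3.
Proof.
case: i => [[|[|[|[|i]]]] Hi] //.
- by left; apply: val_inj.
- by right; left; apply: val_inj.
- by right; right; left; apply: val_inj.
- by right; right; right; apply: val_inj.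
Qed.

Lemma sum4 (F : 'I_4 -> C) : \sum_i F i = F o0 + F o1 + F o2 + F o3.
Proof.
rewrite !big_ord_recl big_ord0 addr0 !addrA.
by congr (_ + _ + _ + _); congr F; apply: val_inj.
Qed.

Definition inv4 (i j k l : nat) : nat :=
  ((j < i)%N + (k < i)%N + (l < i)%N + (k < j)%N + (l < j)%N + (l < k)%N)%N.
Definition sgn4 (i j k l : 'I_4) : int :=
  if uniq [:: i; j; k; l] then (-1) ^+ (inv4 i j k l) else 0.
Definition nu0 (i j k l : 'I_4) : C := (sgn4 i j k l)%:~R.

Definition Mnu (i j k l : 'I_4) : 'M[C]_4 :=
  \matrix_(a < 4, b < 4) ((tnth [tuple i; j; k; l] a == b)%:R : C).

Lemma nuE i j k l z : nu i j k l z = \det (Mnu i j k l).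
Proof. by []. Qed.

Lemma det_xrow_neg (A : 'M[C]_4) (a b : 'I_4) : a != b -> \det (xrow a b A) = - \det A.
Proof.
by move=> ab; rewrite xrowE det_mulmx /tperm_mx det_perm odd_tperm ab expr1 mulN1r.
Qed.

Lemma Mnu12 i j k l : Mnu j i k l = xrow o0 o1 (Mnu i j k l).
Proof.
apply/matrixP=> a b; rewrite !mxE.
by case: (ord4P a) => [->|[->|[->|->]]]; rewrite ?tpermL ?tpermR ?tpermD.
Qed.

Lemma Mnu23 i j k l : Mnu i k j l = xrow o1 o2 (Mnu i j k l).
Proof.
apply/matrixP=> a b; rewrite !mxE.
by case: (ord4P a) => [->|[->|[->|->]]]; rewrite ?tpermL ?tpermR ?tpermD.
Qed.
Lemma Mnu34 i j k l : Mnu i j l k = xrow o2 o3 (Mnu i j k l).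
Proof.
apply/matrixP=> a b; rewrite !mxE.
by case: (ord4P a) => [->|[->|[->|->]]]; rewrite ?tpermL ?tpermR ?tpermD.
Qed.
Lemma dsw12 i j k l : \det (Mnu i j k l) = - \det (Mnu j i k l).
Proof. by rewrite Mnu12 det_xrow_neg ?opprK. Qed.
Lemma dsw23 i j k l : \det (Mnu i j k l) = - \det (Mnu i k j l).
Proof. by rewrite Mnu23 det_xrow_neg ?opprK. Qed.
Lemma dsw34 i j k l : \det (Mnu i j k l) = - \det (Mnu i j l k).
Proof. by rewrite Mnu34 det_xrow_neg ?opprK. Qed.
Lemma dbase : \det (Mnu o0 o1 o2 o3) = 1.
Proof.
rewrite -[RHS](det1 C 4); congr (\det _); apply/matrixP=> a b; rewrite !mxE.
by case: (ord4P a) => [->|[->|[->|->]]].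
Qed.

Ltac sortnu :=
  match goal with
  | |- \det (Mnu ?a ?b ?c ?d) = _ =>
    first [ have _ : (nat_of_ord b < nat_of_ord a)%N by [];
            rewrite (dsw12 a b c d); apply: canLR (@opprK _) _; sortnu
          | have _ : (nat_of_ord c < nat_of_ord b)%N by [];
            rewrite (dsw23 a b c d); apply: canLR (@opprK _) _; sortnu
          | have _ : (nat_of_ord d < nat_of_ord c)%N by [];
            rewrite (dsw34 a b c d); apply: canLR (@opprK _) _; sortnu
          | rewrite dbase ]
  end.

Ltac altnu :=
  first [ by apply: (@determinant_alternate _ _ _ o0 o1) => //= b; rewrite !mxE
        | by apply: (@determinant_alternate _ _ _ o0 o2) => //= b; rewrite !mxE
        | by apply: (@determinant_alternate _ _ _ o0 o3) => //= b; rewrite !mxE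
        | by apply: (@determinant_alternate _ _ _ o1 o2) => //= b; rewrite !mxE
        | by apply: (@determinant_alternate _ _ _ o1 o3) => //= b; rewrite !mxE
        | by apply: (@determinant_alternate _ _ _ o2 o3) => //= b; rewrite !mxE ].

Lemma nu_table i j k l z : nu i j k l z = nu0 i j k l.
Proof.
rewrite nuE.
case: (ord4P i) => [->|[->|[->|->]]];
case: (ord4P j) => [->|[->|[->|->]]];
case: (ord4P k) => [->|[->|[->|->]]];
case: (ord4P l) => [->|[->|[->|->]]];
rewrite /nu0 /sgn4 /inv4 /=;
first [ altnu | sortnu; rewrite ?opprK /= ?expr0z // ].
Qed.
End S.

Section S.
Variable C : numClosedFieldType.
Implicit Types x y g : 'I_4 -> C.

Definition nuX x j k l : C := \sum_i x i * nu0 C i j k l.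
Definition pp x y k l : C := \sum_j y j * nuX x j k l.
Definition W2 (al be : 'I_4 -> 'I_4 -> C) i j k l : C :=
    al i j * be k l - al i k * be j l + al i l * be j k
  + al j k * be i l - al j l * be i k + al k l * be i j.

Definition ppc x y (k l : 'I_4) : C :=
  match nat_of_ord k, nat_of_ord l with
  | 0, 0 => 0
  | 0, 1 => (x o2 * y o3 - x o3 * y o2)
  | 0, 2 => - (x o1 * y o3 - x o3 * y o1)
  | 0, 3 => (x o1 * y o2 - x o2 * y o1)
  | 1, 0 => - (x o2 * y o3 - x o3 * y o2)
  | 1, 1 => 0
  | 1, 2 => (x o0 * y o3 - x o3 * y o0)
  | 1, 3 => - (x o0 * y o2 - x o2 * y o0)
  | 2, 0 => (x o1 * y o3 - x o3 * y o1)
  | 2, 1 => - (x o0 * y o3 - x o3 * y o0)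
  | 2, 2 => 0
  | 2, 3 => (x o0 * y o1 - x o1 * y o0)
  | 3, 0 => - (x o1 * y o2 - x o2 * y o1)
  | 3, 1 => (x o0 * y o2 - x o2 * y o0)
  | 3, 2 => - (x o0 * y o1 - x o1 * y o0)
  | 3, 3 => 0
  | _, _ => 0
  end.
Definition nuXc x (j k l : 'I_4) : C :=
  match nat_of_ord j, nat_of_ord k, nat_of_ord l with
  | 0, 1, 2 => - x o3
  | 0, 1, 3 => x o2
  | 0, 2, 1 => x o3
  | 0, 2, 3 => - x o1
  | 0, 3, 1 => - x o2
  | 0, 3, 2 => x o1
  | 1, 0, 2 => x o3
  | 1, 0, 3 => - x o2
  | 1, 2, 0 => - x o3
  | 1, 2, 3 => x o0
  | 1, 3, 0 => x o2
  | 1, 3, 2 => - x o0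
  | 2, 0, 1 => - x o3
  | 2, 0, 3 => x o1
  | 2, 1, 0 => x o3
  | 2, 1, 3 => - x o0
  | 2, 3, 0 => - x o1
  | 2, 3, 1 => x o0
  | 3, 0, 1 => x o2
  | 3, 0, 2 => - x o1
  | 3, 1, 0 => - x o2
  | 3, 1, 2 => x o0
  | 3, 2, 0 => x o1
  | 3, 2, 1 => - x o0
  | _, _, _ => 0
  end.

Ltac c4 i := case: (ord4P i) => [->|[->|[->|->]]].

Lemma nuXE x j k l : nuX x j k l = nuXc x j k l.
Proof.
rewrite /nuX !sum4 /nu0 /sgn4 /inv4.
c4 j; c4 k; c4 l; rewrite /= ?mulr0 ?mulr1 ?addr0 ?add0r ?mulrN ?mulr1 //.
Qed.

Lemma ppE x y k l : pp x y k l = ppc x y k l.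
Proof.
rewrite /pp !sum4 !nuXE.
c4 k; c4 l; rewrite /nuXc /ppc /=; ring.
Qed.

Lemma I1 x y i j k l : W2 (pp x y) (pp x y) i j k l = 0.
Proof.
rewrite /W2 !ppE.
c4 i; c4 j; c4 k; c4 l; rewrite /ppc /=; ring.
Qed.

Lemma I2 x y l : \sum_k x k * pp x y k l = 0.
Proof. rewrite sum4 !ppE; c4 l; rewrite /ppc /=; ring. Qed.

Lemma I3 x y a b i j :
  pp x y a i * pp x y b j - pp x y a j * pp x y b i = pp x y a b * pp x y i j.
Proof. rewrite !ppE; c4 a; c4 b; c4 i; c4 j; rewrite /ppc /=; ring. Qed.

Lemma pp_lin x y w p q k l :
  pp x (fun m => p * y m + q * w m) k l = p * pp x y k l + q * pp x w k l.
Proof. rewrite !ppE; c4 k; c4 l; rewrite /ppc /=; ring. Qed.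
End S.

Section S.
Variable C : numClosedFieldType.
Implicit Types x y g u : 'I_4 -> C.
Ltac c4 i := case: (ord4P i) => [->|[->|[->|->]]].

Lemma W2_wedge11 g (al : 'I_4 -> C) be i j k l :
  let T j k l := al j * be k l - al k * be j l + al l * be j k in
  W2 (fun c j => g c * al j - g j * al c) be i j k l =
  g i * T j k l - g j * T i k l + g k * T i j l - g l * T i j k.
Proof. rewrite /W2 /=. ring. Qed.

Lemma I7 x y a j k l :
  pp x y a j * pp x y k l - pp x y a k * pp x y j l + pp x y a l * pp x y j k = 0.
Proof. rewrite !ppE; c4 a; c4 j; c4 k; c4 l; rewrite /ppc /=; ring. Qed.

Lemma I4 x y g a i j k l :
  W2 (fun c j => g c * pp x y a j - g j * pp x y a c) (pp x y) i j k l = 0.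
Proof. by rewrite W2_wedge11 /= !I7 !mulr0 !subrr !addr0 subrr. Qed.

Lemma I6 x y u i j k l : W2 (pp x u) (pp x y) i j k l = 0.
Proof. rewrite /W2 !ppE; c4 i; c4 j; c4 k; c4 l; rewrite /ppc /=; ring. Qed.

Lemma pp_anti x y k l : pp x y k l = - pp x y l k.
Proof. rewrite !ppE; c4 k; c4 l; rewrite /ppc /=; ring. Qed.

Lemma pp_unit x a j c : pp x (fun m => (m == a)%:R) j c = nuX x a j c.
Proof. rewrite /pp sum4; c4 a; rewrite /=; ring. Qed.

Lemma W2N (P Q : 'I_4 -> 'I_4 -> C) i j k l : W2 (fun c j => - P c j) Q i j k l = - W2 P Q i j k l.
Proof. rewrite /W2; ring. Qed.

Lemma I5 x y a i j k l : W2 (fun c j => nuX x a j c) (pp x y) i j k l = 0.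
Proof.
have E c0 j0 : nuX x a j0 c0 = - pp x (fun m => (m == a)%:R) c0 j0 by rewrite -pp_anti pp_unit.
have := I6 x y (fun m => (m == a)%:R) i j k l; rewrite /W2 /= !E => H.
by rewrite -[RHS]oppr0 -H; ring.
Qed.
End S.

Section A.
Variable C : numClosedFieldType.
Implicit Types (h : pt C) (e d : C).

Definition N h : C := \sum_k `|h k|.
Definition near0 (P : pt C -> Prop) :=
  exists2 d : C, 0 < d & forall h : pt C, (forall k, `|h k| < d) -> P h.

Lemma dmin d1 d2 : 0 < d1 -> 0 < d2 -> exists2 d, 0 < d & d <= d1 /\ d <= d2.
Proof.
move=> h1 h2; have [le12|nle] := boolP (d1 <= d2).
  by exists d1.
exists d2 => //; split => //.
have r1 := gtr0_real h1; have r2 := gtr0_real h2.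
by apply: ltW; rewrite real_ltNge.
Qed.

Lemma near0_and (P Q : pt C -> Prop) : near0 P -> near0 Q -> near0 (fun h => P h /\ Q h).
Proof.
case=> d1 d1p H1 [d2 d2p H2]; have [d dp [le1 le2]] := dmin d1p d2p.
exists d => // h hd; split; [apply: H1 | apply: H2] => k; exact: lt_le_trans (hd k) _.
Qed.

Lemma near0_mono (P Q : pt C -> Prop) : (forall h, P h -> Q h) -> near0 P -> near0 Q.
Proof. by move=> PQ [d dp H]; exists d => // h /H /PQ. Qed.

Lemma N_ge0 h : 0 <= N h. Proof. by apply: sumr_ge0 => k _. Qed.

Lemma two_neq0 : (2%:R : C) != 0. Proof. by rewrite pnatr_eq0. Qed.
Lemma hlf_gt0 e : 0 < e -> 0 < e / 2%:R.
Proof. by move=> ep; rewrite divr_gt0 // ltr0n. Qed.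
Lemma hlfD e : e / 2%:R + e / 2%:R = e.
Proof. by field. Qed.
Lemma hlf_lt e : 0 < e -> e / 2%:R < e.
Proof. by move=> ep; rewrite -[X in _ < X](hlfD e) ltrDr hlf_gt0. Qed.

Lemma near0_N c : 0 < c -> near0 (fun h => N h <= c).
Proof.
move=> cp; exists (c / 4%:R); first by rewrite divr_gt0 // ltr0n.
move=> h hd; rewrite /N sum4.
have cE : c = c / 4%:R + c / 4%:R + c / 4%:R + c / 4%:R.
  by field.
by rewrite [X in _ <= X]cE !lerD // ltW.
Qed.

Definition small (r : pt C -> C) := forall e, 0 < e -> near0 (fun h => `|r h| <= e * N h).
Definition bigO (r : pt C -> C) := exists2 M, 0 <= M & near0 (fun h => `|r h| <= M * N h).
Definition tiny (r : pt C -> C) := forall e, 0 < e -> near0 (fun h => `|r h| <= e).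

Lemma frac_le M e : 0 <= M -> 0 < e -> M * e / (M + 1) <= e.
Proof.
move=> Mp ep; have Mp1 : 0 < M + 1 by rewrite ltr_wpDl.
by rewrite ler_pdivrMr // mulrDr mulr1 mulrC lerDl ltW.
Qed.

Lemma small_ext r1 r2 : small r1 -> (forall h, r1 h = r2 h) -> small r2.
Proof. by move=> s E e ep; apply: near0_mono (s e ep) => h; rewrite E. Qed.
Lemma bigO_ext r1 r2 : bigO r1 -> (forall h, r1 h = r2 h) -> bigO r2.
Proof. by move=> [M Mp H] E; exists M => //; apply: near0_mono H => h; rewrite E. Qed.

Lemma small0 : small (fun _ => 0).
Proof. by move=> e ep; exists 1 => // h _; rewrite normr0 mulr_ge0 ?N_ge0 // ltW. Qed.

Lemma small_add r1 r2 : small r1 -> small r2 -> small (fun h => r1 h + r2 h).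
Proof.
move=> s1 s2 e ep; have e2 := hlf_gt0 ep.
apply: near0_mono (near0_and (s1 _ e2) (s2 _ e2)) => h [H1 H2].
apply: le_trans (ler_normD _ _) _.
by rewrite -[X in _ <= X * _]hlfD mulrDl lerD.
Qed.

Lemma small_scale c r : small r -> small (fun h => c * r h).
Proof.
move=> s e ep; have cp : 0 < `|c| + 1 by rewrite ltr_wpDl.
apply: near0_mono (s _ (divr_gt0 ep cp)) => h H.
rewrite normrM.
apply: le_trans (ler_wpM2l (normr_ge0 c) H) _.
rewrite mulrA ler_wpM2r ?N_ge0 //.
by rewrite mulrA frac_le.
Qed.

Lemma small_bigO r : small r -> bigO r.
Proof. by move=> s; exists 1 => //; exact: s _ ltr01. Qed.

Lemma bigO_add r1 r2 : bigO r1 -> bigO r2 -> bigO (fun h => r1 h + r2 h).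
Proof.
case=> M1 M1p H1 [M2 M2p H2]; exists (M1 + M2); first exact: addr_ge0.
apply: near0_mono (near0_and H1 H2) => h [a b].
by rewrite mulrDl (le_trans (ler_normD _ _)) // lerD.
Qed.

Lemma bigO_lin (a : 'I_4 -> C) : bigO (fun h => \sum_k a k * h k).
Proof.
exists (\sum_k `|a k|); first by apply: sumr_ge0.
exists 1 => // h _.
apply: le_trans (ler_norm_sum _ _ _) _.
rewrite /N mulr_sumr; apply: ler_sum => k _; rewrite normrM.
by rewrite ler_wpM2r // (bigD1 k) //= lerDl sumr_ge0.
Qed.

Lemma bigO_tiny r : bigO r -> tiny r.
Proof.
case=> M Mp H e ep.
have Mp1 : 0 < M + 1 by rewrite ltr_wpDl.
apply: near0_mono (near0_and H (near0_N (divr_gt0 ep Mp1))) => h [H1 H2].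
apply: le_trans H1 _.
apply: le_trans (ler_wpM2l Mp H2) _.
by rewrite mulrA frac_le.
Qed.

Lemma small_mul u v : bigO u -> tiny v -> small (fun h => u h * v h).
Proof.
case=> M Mp H tv e ep.
have Mp1 : 0 < M + 1 by rewrite ltr_wpDl.
apply: near0_mono (near0_and H (tv _ (divr_gt0 ep Mp1))) => h [H1 H2].
rewrite normrM.
apply: le_trans (ler_pM (normr_ge0 _) (normr_ge0 _) H1 H2) _.
have -> : M * N h * (e / (M + 1)) = M * e / (M + 1) * N h by ring.
by rewrite ler_wpM2r ?N_ge0 ?frac_le.
Qed.

Lemma small_mulb r q K : small r -> 0 <= K -> near0 (fun h => `|q h| <= K) ->
  small (fun h => r h * q h).
Proof.
move=> s Kp Hq e ep.
have Kp1 : 0 < K + 1 by rewrite ltr_wpDl.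
apply: near0_mono (near0_and (s _ (divr_gt0 ep Kp1)) Hq) => h [H1 H2].
rewrite normrM.
apply: le_trans (ler_pM (normr_ge0 _) (normr_ge0 _) H1 H2) _.
have -> : e / (K + 1) * N h * K = K * e / (K + 1) * N h by ring.
by rewrite ler_wpM2r ?N_ge0 ?frac_le.
Qed.

Lemma small_near r r' : small r -> near0 (fun h => r' h = r h) -> small r'.
Proof.
by move=> s Hn e ep; apply: near0_mono (near0_and (s _ ep) Hn) => h [H1 ->].
Qed.
End A.

Section B.
Variable C : numClosedFieldType.
Implicit Types (h z : pt C) (e d : C) (f g : fn C) (a b : 'I_4 -> C).

Definition fdiff f z a :=
  small (fun h => f (fun m => z m + h m) - f z - \sum_k a k * h k).

Lemma fdiff_ext f g z a : (forall w, f w = g w) -> fdiff f z a -> fdiff g z a.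
Proof. by move=> E s; apply: small_ext s _ => h; rewrite !E. Qed.

Lemma fdiff_Delta f z a : fdiff f z a ->
  bigO (fun h => f (fun m => z m + h m) - f z) /\ tiny (fun h => f (fun m => z m + h m) - f z).
Proof.
move=> s.
have B : bigO (fun h => f (fun m => z m + h m) - f z).
  have := bigO_ext (bigO_add (bigO_lin a) (small_bigO s)). idtac. move=> H; apply: H => h /=.
  by rewrite addrC subrK.
by split => //; apply: bigO_tiny.
Qed.

Lemma fdiff_cst c z : fdiff (fun _ => c) z (fun _ => 0).
Proof. by rewrite /fdiff; apply: (small_ext (@small0 C)) => h; rewrite sum4; ring. Qed.

Lemma fdiff_var k z : fdiff (fun w => w k) z (fun m => (m == k)%:R).
Proof.
rewrite /fdiff; apply: (small_ext (@small0 C)) => h; rewrite sum4.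
by case: (ord4P k) => [->|[->|[->|->]]] /=; ring.
Qed.

Lemma fdiff_add f g z a b : fdiff f z a -> fdiff g z b ->
  fdiff (fun w => f w + g w) z (fun k => a k + b k).
Proof.
move=> sf sg; rewrite /fdiff; apply: (small_ext (small_add sf sg)) => h.
rewrite !sum4; ring.
Qed.

Lemma fdiff_mul f g z a b : fdiff f z a -> fdiff g z b ->
  fdiff (fun w => f w * g w) z (fun k => g z * a k + f z * b k).
Proof.
move=> sf sg; have [Bf Tf] := fdiff_Delta sf; have [Bg Tg] := fdiff_Delta sg.
rewrite /fdiff; apply: (small_ext (small_add (small_add (small_scale (f z) sg) (small_scale (g z) sf))
                            (small_mul Bf Tg))) => h.
rewrite !sum4; ring.
Qed.

Lemma near_half f z a : fdiff f z a -> f z != 0 ->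
  near0 (fun h => `|f z| / 2%:R <= `|f (fun m => z m + h m)|).
Proof.
move=> sf nz; have [_ Tf] := fdiff_Delta sf.
have hp : 0 < `|f z| / 2%:R by rewrite hlf_gt0 // normr_gt0.
apply: near0_mono (Tf _ hp) => h H.
set F := f _ in H *.
have : `|f z| <= `|F - f z| + `|F|.
  by rewrite distrC; apply: le_trans (ler_normD _ _); rewrite subrK.
rewrite -lerBlDl => H2.
apply: le_trans H2.
rewrite -[X in X <= _](addrK (`|f z| / 2%:R) (`|f z| / 2%:R)) hlfD.
exact: lerB (lexx _) H.
Qed.

Lemma fdiff_inv f z a : fdiff f z a -> f z != 0 ->
  fdiff (fun w => (f w)^-1) z (fun k => - a k / (f z) ^+ 2).
Proof.
move=> sf nz; have [Bf Tf] := fdiff_Delta sf.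
have Hn := near_half sf nz.
have hp : 0 < `|f z| / 2%:R by rewrite hlf_gt0 // normr_gt0.
set K := ((`|f z| / 2%:R) * `|f z| ^+ 2)^-1.
have Kp : 0 <= K by rewrite invr_ge0 mulr_ge0 // ?exprn_ge0 // ltW.
have num : small (fun h => - f z * (f (fun m => z m + h m) - f z - \sum_k a k * h k)
                 + (\sum_k a k * h k) * (f (fun m => z m + h m) - f z)).
  exact: small_add (small_scale _ sf) (small_mul (bigO_lin a) Tf).
rewrite /fdiff; apply: (small_near (small_mulb
   (q := fun h => (f (fun m => z m + h m) * f z ^+ 2)^-1) num Kp _)).
- apply: near0_mono (Hn) => h H.
  have Fp : 0 < `|f (fun m => z m + h m)| by apply: lt_le_trans H.
  have fz0 : 0 < `|f z| by rewrite normr_gt0.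
  have fzp : 0 < `|f z| ^+ 2 by rewrite exprn_gt0.
  rewrite normfV normrM normrX lef_pV2 ?posrE ?mulr_gt0 ?fz0 ?invr_gt0 ?ltr0n //.
  by rewrite ler_wpM2r // ltW.
- apply: near0_mono (Hn) => h H.
  have FP : f (fun m => z m + h m) != 0 by rewrite -normr_gt0 (lt_le_trans hp H).
  by rewrite !sum4; field; rewrite nz FP.
Qed.

Lemma fdiff_grad f z a b : (forall k, a k = b k) -> fdiff f z a -> fdiff f z b.
Proof. by move=> E s; apply: (small_ext s) => h; rewrite !sum4 !E. Qed.

Lemma fdiff_div f g z a b : fdiff f z a -> fdiff g z b -> g z != 0 ->
  fdiff (fun w => f w / g w) z (fun k => (a k * g z - f z * b k) / (g z) ^+ 2).
Proof.
move=> sf sg nz; apply: fdiff_grad (fdiff_mul sf (fdiff_inv sg nz)) => k.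
by field.
Qed.

Lemma fdiff_partial f z a k : fdiff f z a -> has_partial f k z (a k).
Proof.
move=> s e ep.
case: (s _ (hlf_gt0 ep)) => d dp H.
exists d => // h /andP [h0 hd].
pose hv : pt C := fun m => if m == k then h else 0.
have := H hv _.
have hvk : forall m, `|hv m| < d.
  by move=> m; rewrite /hv; case: eqP => _ //; rewrite normr0.
move=> /(_ hvk).
have -> : \sum_k0 a k0 * hv k0 = a k * h.
  by rewrite sum4 /hv; case: (ord4P k) => [->|[->|[->|->]]] /=; ring.
have -> : N hv = `|h|.
  by rewrite /N sum4 /hv; case: (ord4P k) => [->|[->|[->|->]]] /=; rewrite !normr0 ?add0r ?addr0.
rewrite /shift => K.
have hn : h != 0 by rewrite -normr_gt0.
have -> : (f (fun m => z m + (if m == k then h else 0)) - f z) / h - a k =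
          (f (fun m => z m + hv m) - f z - a k * h) / h by rewrite /hv; field.
rewrite normrM normfV ltr_pdivrMr //.
apply: le_lt_trans K _.
by rewrite ltr_pM2r // hlf_lt.
Qed.

Lemma partial_uniq f k z l1 l2 : has_partial f k z l1 -> has_partial f k z l2 -> l1 = l2.
Proof.
move=> H1 H2; apply/eqP; apply/negPn/negP => ne.
have ep : 0 < `|l1 - l2| / 2%:R by rewrite hlf_gt0 // normr_gt0 subr_eq0.
case: (H1 _ ep) => d1 d1p K1; case: (H2 _ ep) => d2 d2p K2.
have [d dp [le1 le2]] := dmin d1p d2p.
have hp := hlf_gt0 dp.
have hn : `|d / 2%:R| = d / 2%:R by rewrite ger0_norm // ltW.
have hl : d / 2%:R < d by rewrite hlf_lt.
set q := (f (shift z k (d / 2%:R)) - f z) / (d / 2%:R).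
have A : `|q - l1| < `|l1 - l2| / 2%:R.
  by apply: K1; rewrite hn hp (lt_le_trans hl le1).
have B : `|q - l2| < `|l1 - l2| / 2%:R.
  by apply: K2; rewrite hn hp (lt_le_trans hl le2).
have := ler_distD q l1 l2; rewrite (distrC l1 q) => D.
by have := le_lt_trans D (ltrD A B); rewrite hlfD ltxx.
Qed.

Lemma has_partial_ext f g k z l : (forall w, f w = g w) -> has_partial f k z l ->
  has_partial g k z l.
Proof. by move=> E H e ep; case: (H e ep) => d dp K; exists d => // h hh; rewrite -!E; exact: K. Qed.

Lemma has_partial_opp f g k z l : (forall w, g w = - f w) -> has_partial f k z l ->
  has_partial g k z (- l).
Proof.
move=> E H e ep; case: (H e ep) => d dp K; exists d => // h hh; rewrite !E.
have -> : (- f (shift z k h) - - f z) / h - - l = - ((f (shift z k h) - f z) / h - l) by ring.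
by rewrite normrN; apply: K.
Qed.

Lemma has_partial_zero f k z : (forall w, f w = 0) -> has_partial f k z 0.
Proof.
by move=> E e ep; exists 1 => // h _; rewrite !E subrr mul0r subr0 normr0.
Qed.

Lemma fdiff_near_nz f z a : fdiff f z a -> f z != 0 ->
  near0 (fun h => f (fun m => z m + h m) != 0).
Proof.
move=> sf nz; apply: near0_mono (near_half sf nz) => h H.
have hp : 0 < `|f z| / 2%:R by rewrite hlf_gt0 // normr_gt0.
by rewrite -normr_gt0 (lt_le_trans hp H).
Qed.
End B.

Section P.
Variable C : numClosedFieldType.

Inductive pe := Cst of C | Var of 'I_4 | Add of pe & pe | Mul of pe & pe.

Fixpoint ev (p : pe) (z : pt C) : C :=
  match p with
  | Cst c => c | Var k => z k
  | Add p q => ev p z + ev q z | Mul p q => ev p z * ev q z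
  end.

Fixpoint dv (k : 'I_4) (p : pe) : pe :=
  match p with
  | Cst _ => Cst 0 | Var m => Cst (m == k)%:R
  | Add p q => Add (dv k p) (dv k q)
  | Mul p q => Add (Mul (dv k p) q) (Mul p (dv k q))
  end.

Lemma fdiff_ev p z : fdiff (ev p) z (fun k => ev (dv k p) z).
Proof.
elim: p => [c|m|p IHp q IHq|p IHp q IHq] /=.
- exact: fdiff_cst.
- by apply: fdiff_grad (fdiff_var m z) => k; rewrite eq_sym.
- exact: fdiff_add.
- by apply: fdiff_grad (fdiff_mul IHp IHq) => k; rewrite mulrC.
Qed.

Lemma partial_ev p k z : has_partial (ev p) k z (ev (dv k p) z).
Proof. exact: (fdiff_partial k (fdiff_ev p z)). Qed.

Lemma dv_comm a b p z : ev (dv a (dv b p)) z = ev (dv b (dv a p)) z.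
Proof.
elim: p => [c|m|p IHp q IHq|p IHp q IHq] //=; by rewrite ?IHp ?IHq; ring.
Qed.

Lemma ev_ext p w w' : (forall m, w m = w' m) -> ev p w = ev p w'.
Proof. by move=> E; elim: p => [c|m|p IHp q IHq|p IHp q IHq] /=; rewrite ?IHp ?IHq ?E. Qed.

Definition psum (f : 'I_4 -> pe) := Add (Add (Add (f o0) (f o1)) (f o2)) (f o3).
Lemma ev_psum f z : ev (psum f) z = \sum_i ev (f i) z.
Proof. by rewrite sum4. Qed.
Definition Subp p q := Add p (Mul (Cst (-1)) q).
Lemma ev_Subp p q z : ev (Subp p q) z = ev p z - ev q z.
Proof. by rewrite /=; ring. Qed.
Lemma ev_dv_Subp k p q z : ev (dv k (Subp p q)) z = ev (dv k p) z - ev (dv k q) z.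
Proof. by rewrite /=; ring. Qed.

Definition quad (Ac : 'I_4 -> 'I_4 -> C) :=
  psum (fun a => psum (fun b => Mul (Mul (Cst (Ac a b)) (Var a)) (Var b))).

Lemma euler Ac z : \sum_k z k * ev (dv k (quad Ac)) z = 2%:R * ev (quad Ac) z.
Proof. rewrite sum4 /quad /psum /=; ring. Qed.

Definition W2pe (P : 'I_4 -> 'I_4 -> pe) i j k l : pe :=
  Add (Add (Add (Add (Add (Mul (P i j) (P k l)) (Mul (Cst (-1)) (Mul (P i k) (P j l))))
    (Mul (P i l) (P j k))) (Mul (P j k) (P i l))) (Mul (Cst (-1)) (Mul (P j l) (P i k))))
    (Mul (P k l) (P i j)).

Lemma ev_W2pe P i j k l w : ev (W2pe P i j k l) w =
  W2 (fun c d => ev (P c d) w) (fun c d => ev (P c d) w) i j k l.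
Proof. rewrite /W2pe /W2 /=; ring. Qed.

Lemma ev_dv_W2pe a P i j k l w : ev (dv a (W2pe P i j k l)) w =
  W2 (fun c d => ev (dv a (P c d)) w) (fun c d => ev (P c d) w) i j k l
  + W2 (fun c d => ev (P c d) w) (fun c d => ev (dv a (P c d)) w) i j k l.
Proof. rewrite /W2pe /W2 /=; ring. Qed.

Lemma W2C (P Q : 'I_4 -> 'I_4 -> C) i j k l : W2 P Q i j k l = W2 Q P i j k l.
Proof. rewrite /W2; ring. Qed.

Lemma W2_ext (P P' Q Q' : 'I_4 -> 'I_4 -> C) i j k l :
  (forall c d, P c d = P' c d) -> (forall c d, Q c d = Q' c d) ->
  W2 P Q i j k l = W2 P' Q' i j k l.
Proof. by move=> EP EQ; rewrite /W2 !EP !EQ. Qed.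

Lemma W2D (P Q R : 'I_4 -> 'I_4 -> C) i j k l :
  W2 (fun c d => P c d + Q c d) R i j k l = W2 P R i j k l + W2 Q R i j k l.
Proof. rewrite /W2; ring. Qed.

Lemma W2lin (p q : C) (P Q R : 'I_4 -> 'I_4 -> C) i j k l :
  W2 (fun c d => p * P c d + q * Q c d) R i j k l = p * W2 P R i j k l + q * W2 Q R i j k l.
Proof. rewrite /W2; ring. Qed.

Lemma wedge22E (al be : form2 C) i j k l z :
  wedge22 al be i j k l z = W2 (fun c d => al c d z) (fun c d => be c d z) i j k l.
Proof. by []. Qed.

Lemma ctr3E (X : vfield C) j k l z : ctr3 X (@nu C) j k l z = nuX (fun m => X m z) j k l.
Proof. by apply: eq_bigr => i _; rewrite nu_table. Qed.

Lemma ctr2E (X Y : vfield C) k l z :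
  ctr2 Y (ctr3 X (@nu C)) k l z = pp (fun m => X m z) (fun m => Y m z) k l.
Proof. by apply: eq_bigr => j _; rewrite ctr3E. Qed.


End P.
Arguments Cst {C}. Arguments Var {C}. Arguments Add {C}. Arguments Mul {C}.
Lemma dv_psum (C : numClosedFieldType) k (f : 'I_4 -> pe C) : dv k (psum f) = psum (fun i => dv k (f i)).
Proof. by []. Qed.
Lemma ev_quad (C : numClosedFieldType) (Ac : 'I_4 -> 'I_4 -> C) z :
  ev (quad Ac) z = \sum_a \sum_b Ac a b * z a * z b.
Proof. by rewrite /quad ev_psum; apply: eq_bigr => a _; rewrite ev_psum. Qed.
#[global] Opaque psum quad.


Definition om_pe (C : numClosedFieldType) (A : 'I_4 -> 'I_4 -> 'I_4 -> 'I_4 -> C) l :=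
  psum (fun k => Mul (Var k) (quad (A k l))).
Definition th_pe (C : numClosedFieldType) (A : 'I_4 -> 'I_4 -> 'I_4 -> 'I_4 -> C) a b :=
  Subp (dv a (om_pe A b)) (dv b (om_pe A a)).
Definition ets_pe (C : numClosedFieldType) (A : 'I_4 -> 'I_4 -> 'I_4 -> 'I_4 -> C) s a b :=
  Add (quad (A a b)) (Mul (Cst s) (th_pe A a b)).
Lemma om_peE (C : numClosedFieldType) (A : 'I_4 -> 'I_4 -> 'I_4 -> 'I_4 -> C) l :
  om_pe A l = psum (fun k => Mul (Var k) (quad (A k l))).
Proof. by []. Qed.
Lemma th_peE (C : numClosedFieldType) (A : 'I_4 -> 'I_4 -> 'I_4 -> 'I_4 -> C) a b :
  th_pe A a b = Subp (dv a (om_pe A b)) (dv b (om_pe A a)).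
Proof. by []. Qed.
Lemma ets_peE (C : numClosedFieldType) (A : 'I_4 -> 'I_4 -> 'I_4 -> 'I_4 -> C) s a b :
  ets_pe A s a b = Add (quad (A a b)) (Mul (Cst s) (th_pe A a b)).
Proof. by []. Qed.
#[global] Opaque om_pe th_pe ets_pe.

Unset Implicit Arguments.
Theorem mainTheorem15 (C : numClosedFieldType) (eta : form2 C) (X Y : vfield C) :
  homogeneous_deg2_form2 eta ->
  integrable2 eta ->
  is_d2 eta (ctr3 X (@nu C)) ->
  (exists k z, X k z <> 0) ->
  linear_vfield Y ->
  (forall i j z, eta i j z = ctr2 Y (ctr3 X (@nu C)) i j z) ->
  let om := ctr1 (@radial C) eta in
  (exists theta, is_d1 om theta) /\
  forall theta, is_d1 om theta ->
  forall s : C,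
    let eta_s : form2 C := fun i j z => eta i j z + s * theta i j z in
    [/\ integrable2 eta_s,
        forall i j k l z, wedge22 eta_s eta_s i j k l z = 0,
        is_d2 eta_s (ctr3 X (@nu C)) &
        forall j z, ctr1 X eta_s j z = 0].
Proof.
move=> [alt Hhom] _ [De [HDp HDs]] _ _ etaE om.
have [A HA] : exists A : 'I_4 -> 'I_4 -> 'I_4 -> 'I_4 -> C,
    forall i j z, eta i j z = \sum_a \sum_b A i j a b * z a * z b.
  have H1 : forall i, exists Ai : 'I_4 -> 'I_4 -> 'I_4 -> C, forall j z,
      eta i j z = \sum_a \sum_b Ai j a b * z a * z b.
    by move=> i; have [Ai HAi] := fin_all_exists (Hhom i); exists Ai.
  by have [A0 HA0] := fin_all_exists H1; exists A0.
have ev_eta : forall i j w, ev (quad (A i j)) w = eta i j w.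
  by move=> i j w; rewrite HA ev_quad.
have Deta_E : forall a i j z, De a i j z = ev (dv a (quad (A i j))) z.
  move=> a i j z; apply: (partial_uniq (HDp a i j z I)).
  exact: (has_partial_ext (fun w => ev_eta i j w) (partial_ev _ a z)).
have ev_om : forall l w, ev (om_pe A l) w = om l w.
  by move=> l w; rewrite om_peE ev_psum /om /ctr1 /radial; apply: eq_bigr => k _ /=; rewrite ev_eta.
have Dom_uniq : forall theta, is_d1 om theta -> forall a b z, theta a b z = ev (th_pe A a b) z.
  move=> theta [D [HD1 HD2]] a b z.
  have E : forall a b, D a b z = ev (dv a (om_pe A b)) z.
    move=> a' b'; apply: (partial_uniq (HD1 a' b' z I)).
    exact: (has_partial_ext (fun w => ev_om b' w) (partial_ev _ a' z)).
  by rewrite HD2 // !E th_peE ev_Subp.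
split.
  exists (fun a b z => ev (th_pe A a b) z); exists (fun a b z => ev (dv a (om_pe A b)) z); split.
  - move=> a b z _; exact: (has_partial_ext (fun w => ev_om b w) (partial_ev _ a z)).
  - by move=> a b z _; rewrite th_peE ev_Subp.
move=> theta Htheta s eta_s.
have thE := Dom_uniq theta Htheta.
have altD : forall c i j z, De c i j z = - De c j i z.
  move=> c i j z; apply: (partial_uniq (HDp c i j z I)).
  apply: (has_partial_opp (f := eta j i)) (HDp c j i z I) => w; exact: alt.
have E1 : forall a b z, ev (th_pe A a b) z = 4%:R * eta a b z - pp (fun m => X m z) z a b.
  move=> a b z.
  have dom : forall a' b', ev (dv a' (om_pe A b')) z = eta a' b' z + \sum_k z k * De a' k b' z.
    move=> a' b'.
    have -> : dv a' (om_pe A b') = psum (fun k => dv a' (Mul (Var k) (quad (A k b')))) by rewrite om_peE dv_psum.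
    rewrite ev_psum /=.
    under eq_bigr do rewrite ev_eta -Deta_E.
    rewrite big_split /=; congr (_ + _).
    by rewrite sum4; case: (ord4P a') => [->|[->|[->|->]]]; rewrite /=; ring.
  rewrite th_peE ev_Subp !dom.
  have cyc : forall k, De k a b z + De a b k z + De b k a z = nuX (fun m => X m z) k a b.
    by move=> k; rewrite -(HDs k a b z I) ctr3E.
  have eul : \sum_k z k * De k a b z = 2%:R * eta a b z.
    by rewrite -(ev_eta a b z) -euler; apply: eq_bigr => k _; rewrite Deta_E.
  set S1 := \sum_k _ * De a _ b z; set S2 := \sum_k _ * De b _ a z.
  have key : S1 - S2 = 2%:R * eta a b z - pp (fun m => X m z) z a b.
    rewrite -eul /S1 /S2 /pp -!sumrB; apply: eq_bigr => k _.
    rewrite -!mulrBr; congr (_ * _).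
    by rewrite (altD a k b) -(cyc k); ring.
  rewrite (alt b a z) (_ : S1 = S2 + (2%:R * eta a b z - pp (fun m => X m z) z a b)).
    ring.
  by rewrite -key; ring.
pose Y'v z := fun m => (1 + 4%:R * s) * Y m z + (- s) * z m.
have Es : forall i j z, eta_s i j z = pp (fun m => X m z) (Y'v z) i j.
  move=> i j z; rewrite /eta_s /= thE E1 /Y'v (pp_lin _ (fun m => Y m z) z) etaE ctr2E; ring.
have wedge0 : forall i j k l z, wedge22 eta_s eta_s i j k l z = 0.
  move=> i j k l z; rewrite wedge22E (W2_ext i j k l (fun c d => Es c d z) (fun c d => Es c d z)).
  exact: I1.
pose Dp c a b z := ev (dv c (ets_pe A s a b)) z.
have ev_ets : forall a b w, ev (ets_pe A s a b) w = eta_s a b w.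
  by move=> a b w; rewrite /eta_s ets_peE /= ev_eta -thE.
have Pets : forall c a b z, has_partial (eta_s a b) c z (Dp c a b z).
  by move=> c a b z; exact: (has_partial_ext (fun w => ev_ets a b w) (partial_ev _ c z)).
have alts : forall a b w, eta_s a b w = - eta_s b a w.
  by move=> a b w; rewrite /eta_s /= (alt a b w) !thE !th_peE !ev_Subp; ring.
have altDp : forall c a b z, Dp c a b z = - Dp c b a z.
  move=> c a b z; apply: (partial_uniq (Pets c a b z)).
  exact: (has_partial_opp (fun w => alts a b w) (Pets c b a z)).
have cycDp : forall a b c z, Dp a b c z + Dp b c a z + Dp c a b z = nuX (fun m => X m z) a b c.
  move=> a b c z; rewrite /Dp !ets_peE /= -!Deta_E !th_peE !ev_dv_Subp.
  rewrite (dv_comm a b (om_pe A c)) (dv_comm b c (om_pe A a)) (dv_comm c a (om_pe A b)).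
  rewrite -ctr3E (HDs a b c z I); ring.
have K3 : forall a z i j k l, W2 (fun c d => Dp a c d z) (fun c d => eta_s c d z) i j k l = 0.
  move=> a z i j k l.
  have Z : ev (dv a (W2pe (ets_pe A s) i j k l)) z = 0.
    apply: (partial_uniq (partial_ev _ a z)).
    apply: has_partial_zero => w.
    rewrite ev_W2pe -(wedge0 i j k l w) wedge22E.
    by apply: W2_ext => c d; rewrite ev_ets.
  have E2 : W2 (fun c d => ev (dv a (ets_pe A s c d)) z) (fun c d => ev (ets_pe A s c d) z) i j k l
          = W2 (fun c d => Dp a c d z) (fun c d => eta_s c d z) i j k l.
    by apply: W2_ext => c d; rewrite ?ev_ets.
  move: Z; rewrite ev_dv_W2pe (W2C (fun c d => ev (ets_pe A s c d) z)) E2 => H.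
  by apply/eqP; move/eqP: H; rewrite -mulr2n mulrn_eq0.
have KEY : forall a' z i j k l,
    W2 (fun c d => Dp c a' d z - Dp d a' c z) (fun c d => eta_s c d z) i j k l = 0.
  move=> a' z i j k l.
  have E c d : Dp c a' d z - Dp d a' c z = nuX (fun m => X m z) a' d c + Dp a' c d z.
    by rewrite (altDp d a' c) (altDp a' c d) -(cycDp a' d c); ring.
  have E' : forall c d, eta_s c d z = eta_s c d z by [].
  rewrite (W2_ext i j k l E E') W2D K3 addr0.
  rewrite (W2_ext i j k l (fun c d => erefl (nuX (fun m => X m z) a' d c)) (fun c d => Es c d z)).
  exact: I5.
have fdF : forall a b z, fdiff (eta_s a b) z (fun k => Dp k a b z).
  by move=> a b z; exact: (fdiff_ext (fun w => ev_ets a b w) (fdiff_ev _ z)).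
split.
- move=> p Hp.
  have [a [b Hab]] : exists a b, eta_s a b p != 0.
    case: (boolP [exists a, exists b, eta_s a b p != 0]) => [/existsP [a /existsP [b Hab]]|H].
      by exists a, b.
    exfalso; apply: Hp => i j; apply/eqP.
    move: H; rewrite negb_exists => /forallP /(_ i).
    by rewrite negb_exists => /forallP /(_ j); rewrite negbK.
  exists (fun w => eta_s a b w != 0); split.
  + move=> z Vz; have [d dp H] := fdiff_near_nz (fdF a b z) Vz.
    exists d => // w Hw.
    have Eq : eta_s a b (fun m => z m + (w m - z m)) = eta_s a b w.
      by rewrite -!ev_ets; apply: ev_ext => m; rewrite addrC subrK.
    by rewrite -Eq; apply: H.
  + exact: Hab.
  + exists (fun j w => eta_s a j w / eta_s a b w), (fun j w => eta_s b j w); split.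
    * move=> i z Vz.
      exists (fun k => (Dp k a i z * eta_s a b z - eta_s a i z * Dp k a b z) / (eta_s a b z) ^+ 2).
      exact: (fdiff_div (fdF a i z) (fdF a b z) Vz).
    * by move=> i z _; exists (fun k => Dp k b i z); exact: fdF.
    * move=> i j z Vz; rewrite /wedge11 !Es; rewrite Es in Vz.
      by rewrite mulrAC [X in _ = _ - X]mulrAC -mulrBl I3 mulrAC mulfV // mul1r.
    * move=> om0 [->|->].
      - pose D1 c j z := (Dp c a j z * eta_s a b z - eta_s a j z * Dp c a b z) / (eta_s a b z) ^+ 2.
        exists (fun c j z => D1 c j z - D1 j c z); split.
          exists D1; split => [c j z Vz|c j z Vz //].
          exact: (fdiff_partial c (fdiff_div (fdF a j z) (fdF a b z) Vz)).
        move=> i j k l z Vz; rewrite wedge22E.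
        have E c d : D1 c d z - D1 d c z = (eta_s a b z)^-1 * (Dp c a d z - Dp d a c z)
            + (- (eta_s a b z)^-2) * (Dp c a b z * eta_s a d z - Dp d a b z * eta_s a c z).
          by rewrite /D1; field.
        have E' : forall c d, eta_s c d z = eta_s c d z by [].
        rewrite (W2_ext i j k l E E') W2lin KEY mulr0 add0r.
        have E3 : forall c d, Dp c a b z * eta_s a d z - Dp d a b z * eta_s a c z =
           Dp c a b z * pp (fun m => X m z) (Y'v z) a d - Dp d a b z * pp (fun m => X m z) (Y'v z) a c.
          by move=> c d; rewrite !Es.
        by rewrite (W2_ext i j k l E3 (fun c d => Es c d z)) I4 mulr0.
      - exists (fun c j z => Dp c b j z - Dp j b c z); split.
          exists (fun c j z => Dp c b j z); split => // c j z _; exact: Pets.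
        by move=> i j k l z _; rewrite wedge22E; exact: KEY.
- exact: wedge0.
- exists Dp; split => [a b c z _|a b c z _]; first exact: Pets.
  by rewrite ctr3E cycDp.
- move=> j z; rewrite /ctr1.
  rewrite (eq_bigr (fun k => X k z * pp (fun m => X m z) (Y'v z) k j)); first exact: I2.
  by move=> k _; rewrite Es.
Qed.
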